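(* For $x\in(0,27/4)$ define \begin{align*} V(x)=&\frac{\sqrt{3}}{2^{10/3}\pi x^{2/3}}\left(3\sqrt{1-4x/27}-1\right)\left(1+\sqrt{1-4x/27}\right)^{1/3}\\ &+\frac{1}{2^{8/3}\pi x^{1/3}\sqrt{3}}\left(3\sqrt{1-4x/27}+1\right)\left(1+\sqrt{1-4x/27}\right)^{-1/3}. \end{align*} Then for every integer $n\ge0$, \[ \int_0^{27/4}x^nV(x)\,dx=\binom{3n}{n}\frac{1}{n+1}. \] Consequently $V$ is the density of the unique probability measure $\mu_0$ on $\mathbb{R}$ whose moments are $\binom{3n}{n}\frac{1}{n+1}$, $n\ge0$. *)

(* Defs.v *)
From Stdlib Require Import Reals.
Open Scope R_scope.

(* The function V on (0, 27/4); real powers via Rpower (arguments are > 0 there). *)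
Definition V (x : R) : R :=
  let s := sqrt (1 - 4 * x / 27) in
  sqrt 3 / (Rpower 2 (10/3) * PI * Rpower x (2/3))
    * (3 * s - 1) * Rpower (1 + s) (1/3)
  + 1 / (Rpower 2 (8/3) * PI * Rpower x (1/3) * sqrt 3)
    * (3 * s + 1) * Rpower (1 + s) (-(1/3)).

Definition improper_int_0 (f : R -> R) (b l : R) : Prop :=
  (forall t, 0 < t <= b -> inhabited (Riemann_integrable f t b)) /\
  (forall eps, eps > 0 -> exists delta, delta > 0 /\
     forall t (pr : Riemann_integrable f t b),
       0 < t < delta -> Rabs (RiemannInt pr - l) < eps).

(* Main.v *)
Require Import Defs.
From Stdlib Require Import Reals Lra Lia Psatz.
From Coquelicot Require Import Coquelicot.
Open Scope R_scope.

Definition X (t : R) : R := 27 * t^3 / (1 + t^3)^2.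
Definition K : R := sqrt 3 / (36 * PI).
Definition Vt (t : R) : R := K * (1 - t) * (1 + t)^3 / t^2.

Ltac nzf := match goal with |- _ <> 0 =>
  repeat match goal with
         | |- _ * _ <> 0 => apply Rmult_integral_contrapositive_currified
         | |- _ ^ _ <> 0 => apply pow_nonzero end;
  first [ lra | apply Rgt_not_eq; unfold Rgt; nra | apply Rlt_not_eq; nra ] end.
Ltac nz := repeat split; try nzf.

Lemma Rpower_cube y k : 0 < y -> Rpower (y^3) (INR k / 3) = y^k.
Proof.
  intros Hy. rewrite <- (Rpower_pow 3 y Hy), Rpower_mult.
  replace (INR 3 * (INR k / 3)) with (INR k) by (simpl; field).
  now apply Rpower_pow.
Qed.

Lemma Rpower_cube_inv y : 0 < y -> Rpower (y^3) (-(1/3)) = / y.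
Proof.
  intros Hy. rewrite Rpower_Ropp.
  replace (1/3) with (INR 1 / 3) by (simpl; field).
  rewrite Rpower_cube by lra. now rewrite pow_1.
Qed.

Lemma sqrt3_sq : sqrt 3 * sqrt 3 = 3.
Proof. apply sqrt_sqrt; lra. Qed.

Lemma V_X t : 0 < t <= 1 -> V (X t) = Vt t.
Proof.
  intros [Ht0 Ht1].
  set (u := Rpower (1 + t^3) (1/3)).
  set (q := Rpower 2 (1/3)).
  assert (Ht3 : 0 < t^3) by (apply pow_lt; lra).
  assert (Hu : 0 < u) by (unfold u, Rpower; apply exp_pos).
  assert (Hq : 0 < q) by (unfold q, Rpower; apply exp_pos).
  assert (Hu3 : u^3 = 1 + t^3).
  { unfold u. rewrite <- (Rpower_pow 3 (Rpower (1 + t^3) (1/3))) by (apply exp_pos). rewrite Rpower_mult.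
    replace (1/3 * INR 3) with 1 by (simpl; field). apply Rpower_1. lra. }
  assert (Hq3 : q^3 = 2).
  { unfold q. rewrite <- (Rpower_pow 3 (Rpower 2 (1/3))) by (apply exp_pos). rewrite Rpower_mult.
    replace (1/3 * INR 3) with 1 by (simpl; field). apply Rpower_1. lra. }
  assert (HX : X t = (3 * t / u^2)^3).
  { unfold X. rewrite <- Hu3. field; nz. }
  assert (Hs : sqrt (1 - 4 * X t / 27) = (1 - t^3) / (1 + t^3)).
  { replace (1 - 4 * X t / 27) with (((1 - t^3) / (1 + t^3))^2).
    apply sqrt_pow2. apply Rdiv_le_0_compat; try lra.
    assert (t^3 <= 1) by (replace 1 with (1^3) by ring; apply pow_incr; lra). lra.
    unfold X. field; nz. }
  assert (H1s : 1 + (1 - t^3) / (1 + t^3) = (q / u)^3).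
  { replace ((q/u)^3) with (q^3/u^3) by (field; nz). rewrite Hq3, Hu3. field; nz. }
  assert (E1 : Rpower 2 (10/3) = 8 * q).
  { rewrite <- Hq3. replace (10/3) with (INR 10 / 3) by (simpl; field).
    rewrite Rpower_cube by lra. replace (q^10) with ((q^3)^3*q) by ring. rewrite Hq3. ring. }
  assert (E2 : Rpower 2 (8/3) = 4 * q^2).
  { rewrite <- Hq3. replace (8/3) with (INR 8 / 3) by (simpl; field).
    rewrite Rpower_cube by lra. replace (q^8) with ((q^3)^2*q^2) by ring. rewrite Hq3. ring. }
  assert (E3 : Rpower (X t) (2/3) = (3 * t / u^2)^2).
  { rewrite HX. replace (2/3) with (INR 2 / 3) by (simpl; field).
    apply Rpower_cube. apply Rdiv_lt_0_compat; try lra. apply pow_lt; lra. }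
  assert (E4 : Rpower (X t) (1/3) = (3 * t / u^2)).
  { rewrite HX. replace (1/3) with (INR 1 / 3) by (simpl; field).
    rewrite Rpower_cube. apply pow_1. apply Rdiv_lt_0_compat; try lra. apply pow_lt; lra. }
  assert (E5 : Rpower (1 + (1 - t^3) / (1 + t^3)) (1/3) = q / u).
  { rewrite H1s. replace (1/3) with (INR 1 / 3) by (simpl; field).
    rewrite Rpower_cube. apply pow_1. apply Rdiv_lt_0_compat; lra. }
  assert (E6 : Rpower (1 + (1 - t^3) / (1 + t^3)) (-(1/3)) = u / q).
  { rewrite H1s. rewrite Rpower_cube_inv. field; nz. apply Rdiv_lt_0_compat; lra. }
  unfold V. cbv zeta. rewrite Hs, E1, E2, E3, E4, E5, E6.
  assert (PI > 0) by apply PI_RGT_0.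
  assert (sqrt 3 > 0) by (apply sqrt_lt_R0; lra).
  transitivity (sqrt 3 * u^3 * (3 * ((1 - t ^ 3) / (1 + t ^ 3)) - 1) / (72 * PI * t^2)
     + u^3 * (3 * ((1 - t ^ 3) / (1 + t ^ 3)) + 1) / (24 * PI * t * sqrt 3)).
  { replace (q^2) with (q^3 / q) by (field; nz). rewrite Hq3. field; nz. }
  rewrite Hu3. unfold Vt, K.
  apply Rmult_eq_reg_r with (sqrt 3). 2: lra.
  field_simplify; nz.
  rewrite pow2_sqrt by lra. field. nz.
Qed.

Section Cont.
Lemma cmul (f g : R -> R) x : continuous f x -> continuous g x -> continuous (fun y => f y * g y) x.
Proof. intros; now apply (continuous_mult f g). Qed.
Lemma cplus (f g : R -> R) x : continuous f x -> continuous g x -> continuous (fun y => f y + g y) x.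
Proof. intros; now apply (continuous_plus f g). Qed.
Lemma cminus (f g : R -> R) x : continuous f x -> continuous g x -> continuous (fun y => f y - g y) x.
Proof. intros; now apply (continuous_minus f g). Qed.
Lemma copp (f : R -> R) x : continuous f x -> continuous (fun y => - f y) x.
Proof. intros; now apply (continuous_opp f). Qed.
Lemma cdiv (f g : R -> R) x : continuous f x -> continuous g x -> g x <> 0 -> continuous (fun y => f y / g y) x.
Proof. intros; apply cmul; auto. now apply continuous_Rinv_comp. Qed.
Lemma cpow (f : R -> R) n x : continuous f x -> continuous (fun y => f y ^ n) x.
Proof. intros. induction n. apply continuous_const. simpl. now apply cmul. Qed.
Lemma csqrt (f : R -> R) x : continuous f x -> continuous (fun y => sqrt (f y)) x.
Proof. intros; now apply continuous_sqrt_comp. Qed.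
Lemma cRpower (f : R -> R) r x : continuous f x -> 0 < f x -> continuous (fun y => Rpower (f y) r) x.
Proof.
  intros. unfold Rpower. apply continuous_exp_comp. apply cmul. apply continuous_const.
  apply (continuous_comp f ln). auto. now apply continuous_ln.
Qed.
Lemma cconst (c : R) (x : R) : continuous (fun _ : R => c) x.
Proof. apply continuous_const. Qed.
Lemma cid x : continuous (fun y : R => y) x.
Proof. apply continuous_id. Qed.
End Cont.

Ltac cont1 :=
  match goal with
  | |- continuous (fun y => @?f y * @?g y) _ => apply (cmul f g)
  | |- continuous (fun y => @?f y / @?g y) _ => apply (cdiv f g)
  | |- continuous (fun y => @?f y + @?g y) _ => apply (cplus f g)
  | |- continuous (fun y => @?f y - @?g y) _ => apply (cminus f g)
  | |- continuous (fun y => - @?f y) _ => apply (copp f)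
  | |- continuous (fun y => @?f y ^ ?n) _ => apply (cpow f n)
  | |- continuous (fun y => sqrt (@?f y)) _ => apply (csqrt f)
  | |- continuous (fun y => Rpower (@?f y) ?r) _ => apply (cRpower f r)
  | |- continuous (fun y => y) _ => apply cid
  | |- continuous (fun y => ?c) _ => apply cconst
  end.
Ltac cont := repeat cont1.

Lemma Rpower_pos a r : 0 < Rpower a r.
Proof. apply exp_pos. Qed.

Ltac pos := match goal with
  | |- 0 < _ * _ => apply Rmult_lt_0_compat; pos
  | |- 0 < Rpower _ _ => apply Rpower_pos
  | |- 0 < PI => apply PI_RGT_0
  | |- 0 < sqrt _ => apply sqrt_lt_R0; lra
  | _ => lra end.

Lemma f_cont n x : 0 < x -> continuous (fun y => y ^ n * V y) x.
Proof.
  intros Hx. unfold V. cbv zeta.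
  cont.
  all: cbv beta; try lra.
  all: try (pose proof (sqrt_pos (1 - 4 * x / 27)); lra).
  all: apply Rgt_not_eq; unfold Rgt; pos.
Qed.

Definition Xd (t : R) : R := 81 * t^2 * (1 - t^3) / (1 + t^3)^3.
Definition g (n : nat) (t : R) : R :=
  81 * K * X t ^ n * ((1 - t)^2 * (1 + t + t^2)) / (1 - t + t^2)^3.

Lemma t3pos t : 0 <= t -> 0 < 1 + t^3.
Proof. intros. assert (0 <= t^3) by (apply pow_le; lra). lra. Qed.

Lemma qpos t : 0 < 1 - t + t^2.
Proof. nra. Qed.

Lemma X_deriv t : 0 <= t -> is_derive X t (Xd t).
Proof.
  intros Ht. pose proof (t3pos t Ht). unfold X, Xd. auto_derive. nz. field; nz.
Qed.

Lemma Xd_cont t : 0 <= t -> continuous Xd t.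
Proof. intros Ht. pose proof (t3pos t Ht). unfold Xd. cont. cbv beta. nz. Qed.

Lemma X1 : X 1 = 27/4.
Proof. unfold X. field. Qed.

Lemma X_pos t : 0 < t -> 0 < X t.
Proof. intros. unfold X. pose proof (t3pos t). apply Rdiv_lt_0_compat. 
  assert (0 < t^3) by (apply pow_lt; lra). lra. apply pow_lt. apply H0; lra. Qed.

Lemma sqrt3_pos : 0 < sqrt 3.
Proof. apply sqrt_lt_R0; lra. Qed.

Definition al (n : nat) : R := 2 * (2 * INR n + 1) * (INR n + 2).
Definition be (n : nat) : R := 3 * (3 * INR n + 1) * (3 * INR n + 2).

Definition H (n : nat) (t : R) : R :=
  -27 * K * X t ^ n * t / (1 + t^3)^2 *
  (18 * (1 + t) * (1 - t^3) + (27 * INR n - (4 * INR n + 2) * X t) * (1 - t) * (1 + t)^3).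

Lemma H_deriv n t : 0 <= t -> is_derive (H n) t (g n t * (al n * X t - be n)).
Proof.
  intros Ht. pose proof (t3pos t Ht). pose proof (qpos t).
  unfold H, g, al, be. auto_derive.
  { repeat split; try (exists (Xd t); now apply X_deriv). nz. }
  replace (Derive (fun x : R => X x) t) with (Xd t) by (symmetry; now apply is_derive_unique, X_deriv).
  destruct n as [|m].
  - simpl. unfold X, Xd. field. nz.
  - rewrite S_INR. simpl pred. simpl pow. set (P := X t ^ m). unfold X, Xd. field. nz.
Qed.

Lemma g_cont n t : 0 <= t -> continuous (g n) t.
Proof.
  intros Ht. pose proof (t3pos t Ht). pose proof (qpos t).
  unfold g, X, K. cont. all: cbv beta; nz.
  all: apply Rgt_not_eq; unfold Rgt; pos.
Qed.

Lemma gal_cont n t : 0 <= t -> continuous (fun t => g n t * (al n * X t - be n)) t.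
Proof.
  intros Ht. apply cmul. now apply g_cont. apply cminus. apply cmul. apply cconst.
  apply (ex_derive_continuous (V:=R_NormedModule) X). exists (Xd t). now apply X_deriv. apply cconst.
Qed.

Lemma H0 n : H n 0 = 0.
Proof. unfold H, X. field; nz. Qed.

Lemma H1 n : H n 1 = 0.
Proof. unfold H, X. field; nz. Qed.

Definition F0 (t : R) : R :=
  81 * K * (t * (1 - t^2) / (3 * (1 - t + t^2)^2) + 4 / (3 * sqrt 3) * atan ((2 * t - 1) / sqrt 3)).

Lemma F0_deriv t : is_derive F0 t (g 0 t).
Proof.
  pose proof (qpos t). pose proof sqrt3_pos. unfold F0, g. auto_derive.
  { nz. }
  simpl. unfold K.
  replace (1 + (2 * t + - (1)) * / sqrt 3 * ((2 * t + - (1)) * / sqrt 3 * 1))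
    with (4 * (1 - t + t^2) / 3).
  2: { field_simplify; try nz. rewrite pow2_sqrt by lra. field. }
  replace (4 / (3 * sqrt 3) * (2 * 1 * / sqrt 3 * / (4 * (1 - t + t ^ 2) / 3)))
    with (2 / (3 * (1 - t + t^2))).
  2: { field_simplify; try nz. rewrite pow2_sqrt by lra. field. nz. }
  pose proof PI_RGT_0. field. nz.
Qed.

Lemma F0_diff : F0 1 - F0 0 = 1.
Proof.
  unfold F0.
  replace ((2 * 1 - 1) / sqrt 3) with (tan (PI/6)) by (rewrite tan_PI6; field; nz; apply Rgt_not_eq, sqrt3_pos).
  replace ((2 * 0 - 1) / sqrt 3) with (- tan (PI/6)) by (rewrite tan_PI6; field; apply Rgt_not_eq, sqrt3_pos).
  rewrite atan_opp, atan_tan by (pose proof PI_RGT_0; lra).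
  unfold K. pose proof PI_RGT_0. pose proof sqrt3_pos. field. nz.
Qed.

Lemma is_RInt_eq (f : R -> R) a b l l' : is_RInt f a b l -> l = l' -> is_RInt f a b l'.
Proof. intros; now subst. Qed.

Lemma Cform n : Binomial.C (3*n) n = INR (Factorial.fact (3*n)) / (INR (Factorial.fact n) * INR (Factorial.fact (2*n))).
Proof. unfold Binomial.C. now replace (3*n-n)%nat with (2*n)%nat by lia. Qed.

Lemma comb n : Binomial.C (3 * S n) (S n) / INR (S n + 1)
   = / al n * (be n * (Binomial.C (3*n) n / INR (n+1))).
Proof.
  rewrite !Cform.
  replace (3 * S n)%nat with (S (S (S (3*n)))) by lia.
  replace (2 * S n)%nat with (S (S (2*n))) by lia.
  replace (S n + 1)%nat with (S (S n)) by lia.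
  replace (n + 1)%nat with (S n) by lia.
  cbn [Factorial.fact].
  pose proof (pos_INR n). pose proof (INR_fact_neq_0 n). pose proof (INR_fact_neq_0 (2*n)).
  pose proof (INR_fact_neq_0 (3*n)).
  set (a := INR (Factorial.fact (3*n))) in *. set (b := INR (Factorial.fact (2*n))) in *.
  set (c := INR (Factorial.fact n)) in *.
  unfold al, be. rewrite !mult_INR, !S_INR, !mult_INR. fold a b c. simpl INR.
  field. nz.
Qed.

Lemma mom n : is_RInt (g n) 0 1 (Binomial.C (3 * n) n / INR (n + 1)).
Proof.
  induction n as [|n IH].
  - eapply is_RInt_eq. apply (is_RInt_derive F0 (g 0)).
    intros; apply F0_deriv. intros. apply g_cont. rewrite Rmin_left in H2; lra.
    change (minus (F0 1) (F0 0)) with (F0 1 - F0 0). rewrite F0_diff. unfold Binomial.C; simpl. field.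
  - pose proof (is_RInt_derive (H n) _ 0 1 (fun t Ht => H_deriv n t ltac:(rewrite Rmin_left in Ht; lra))
         (fun t Ht => gal_cont n t ltac:(rewrite Rmin_left in Ht; lra))) as HI.
    rewrite H0, H1 in HI.
    pose proof (is_RInt_scal _ _ _ (/ al n) _ (is_RInt_plus _ _ _ _ _ _ HI (is_RInt_scal _ _ _ (be n) _ IH))) as HJ.
    eapply is_RInt_eq. eapply is_RInt_ext; [| exact HJ].
    + intros t _. unfold scal, plus; simpl. unfold mult; simpl. unfold g. simpl pow.
      assert (al n <> 0) by (unfold al; pose proof (pos_INR n); nz).
      field. split; auto. pose proof (qpos t). nz.
    + rewrite comb. unfold scal, plus, minus, opp; simpl. unfold mult, plus; simpl. ring.
Qed.

Lemma X_le t : 0 <= t -> X t <= 27/4.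
Proof.
  intros Ht. pose proof (t3pos t Ht). unfold X. apply Rle_div_l. apply Rlt_gt, pow_lt; lra.
  pose proof (pow2_ge_0 (1 - t^3)). nra.
Qed.

Lemma change n a : 0 < a <= 1 ->
  is_RInt (fun x => x ^ n * V x) (X a) (27/4) (RInt (g n) a 1).
Proof.
  intros Ha.
  assert (HXa : 0 < X a) by (apply X_pos; lra).
  assert (HXale : X a <= 27/4) by (apply X_le; lra).
  assert (Hc : forall y, Rmin a 1 <= y <= Rmax a 1 -> continuous (fun x => x ^ n * V x) (X y)).
  { intros y Hy. rewrite Rmin_left, Rmax_right in Hy by lra. apply f_cont. apply X_pos; lra. }
  assert (Hd : forall y, Rmin a 1 <= y <= Rmax a 1 -> is_derive X y (Xd y) /\ continuous Xd y).
  { intros y Hy. rewrite Rmin_left, Rmax_right in Hy by lra. split.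
    apply X_deriv; lra. apply Xd_cont; lra. }
  pose proof (is_RInt_comp _ _ _ a 1 Hc Hd) as HC.
  rewrite X1 in HC.
  assert (HE : is_RInt (g n) a 1 (RInt (fun x => x ^ n * V x) (X a) (27/4))).
  { eapply is_RInt_ext; [| exact HC].
    intros y Hy. rewrite Rmin_left, Rmax_right in Hy by lra.
    unfold scal; simpl; unfold mult; simpl.
    rewrite V_X by lra. unfold Vt, g, Xd. pose proof (t3pos y). pose proof (qpos y).
    field. nz. }
  rewrite (is_RInt_unique _ _ _ _ HE).
  apply (RInt_correct (V:=R_CompleteNormedModule)). apply (ex_RInt_continuous (V:=R_CompleteNormedModule)).
  intros z Hz. rewrite Rmin_left, Rmax_right in Hz by lra. apply f_cont. lra.
Qed.

Lemma X_inv x : 0 < x <= 27/4 -> exists a, 0 < a <= 1 /\ X a = x /\ a^3 <= 4 * x / 27.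
Proof.
  intros Hx.
  set (s := sqrt (1 - 4 * x / 27)).
  assert (Hs0 : 0 <= s) by apply sqrt_pos.
  assert (Hs2 : s^2 = 1 - 4 * x / 27) by (apply pow2_sqrt; lra).
  assert (Hs1 : s < 1) by nra.
  set (r := (1 - s) / (1 + s)).
  assert (Hr : 0 < r) by (apply Rdiv_lt_0_compat; lra).
  set (a := Rpower r (1/3)).
  assert (Ha0 : 0 < a) by apply Rpower_pos.
  assert (Ha3 : a^3 = r).
  { unfold a. rewrite <- (Rpower_pow 3 (Rpower r (1/3))) by apply Rpower_pos.
    rewrite Rpower_mult. replace (1/3 * INR 3) with 1 by (simpl; field). apply Rpower_1; lra. }
  assert (Hr1 : r <= 1) by (unfold r; apply Rle_div_l; lra).
  exists a. split; [split|split].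
  - lra.
  - destruct (Rle_lt_dec a 1) as [|Hlt]; auto.
    assert (1 < a * a) by nra. assert (1 < a * a * a) by nra. simpl in Ha3. lra.
  - unfold X. rewrite Ha3. unfold r. field_simplify; try lra.
  - rewrite Ha3. unfold r. apply Rle_div_l. lra. nra.
Qed.

Lemma K_pos : 0 < K.
Proof. unfold K. pose proof PI_RGT_0. pose proof sqrt3_pos. apply Rdiv_lt_0_compat; lra. Qed.

Lemma g_bound n t : 0 <= t <= 1 -> Rabs (g n t) <= 81 * K * (27/4)^n * 8.
Proof.
  intros Ht. pose proof K_pos. pose proof (qpos t).
  assert (HX0 : 0 <= X t).
  { assert (0 <= t^3) by (apply pow_le; lra). unfold X. apply Rmult_le_pos; [lra|].
    apply Rlt_le, Rinv_0_lt_compat, pow_lt, t3pos; lra. }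
  assert (HXn : X t ^ n <= (27/4)^n) by (apply pow_incr; split; auto; apply X_le; lra).
  assert (HXn0 : 0 <= X t ^ n) by (apply pow_le; auto).
  assert (Hnum : 0 <= (1 - t)^2 * (1 + t + t^2) <= 3).
  { assert (0 <= (1 - t)^2 <= 1) by (split; nra). assert (1 <= 1 + t + t^2 <= 3) by nra.
    split; nra. }
  assert (Hd : 27/64 <= (1 - t + t^2)^3).
  { replace (27/64) with ((3/4)^3) by field. apply pow_incr. pose proof (pow2_ge_0 (t - 1/2)). split; nra. }
  assert (Hq : (1 - t)^2 * (1 + t + t^2) / (1 - t + t^2)^3 <= 8).
  { apply Rle_div_l. apply Rlt_gt, pow_lt; lra. nra. }
  assert (Hq0 : 0 <= (1 - t)^2 * (1 + t + t^2) / (1 - t + t^2)^3).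
  { apply Rmult_le_pos. lra. apply Rlt_le, Rinv_0_lt_compat, pow_lt; lra. }
  replace (g n t) with (81 * K * X t ^ n * ((1 - t)^2 * (1 + t + t^2) / (1 - t + t^2)^3))
    by (unfold g; field; nz).
  assert (0 <= 81 * K * X t ^ n) by (apply Rmult_le_pos; lra).
  rewrite Rabs_pos_eq by (apply Rmult_le_pos; lra).
  apply Rmult_le_compat; try lra. apply Rmult_le_compat_l; lra.
Qed.

Theorem mainTheorem4 :
  (forall x, 0 < x < 27/4 -> 0 <= V x) /\
  (forall n : nat,
     improper_int_0 (fun x => x ^ n * V x) (27/4)
                    (Binomial.C (3 * n) n / INR (n + 1))).
Proof.
  split.
  { intros x Hx. destruct (X_inv x) as [a [Ha [HXa _]]]; [lra|].
    rewrite <- HXa, V_X by lra. unfold Vt. pose proof K_pos.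
    apply Rmult_le_pos. apply Rmult_le_pos. apply Rmult_le_pos; lra.
    apply pow_le; lra. apply Rlt_le, Rinv_0_lt_compat, pow_lt; lra. }
  intros n. split.
  { intros t Ht. destruct (X_inv t Ht) as [a [Ha [HXa _]]].
    constructor. apply ex_RInt_Reals_0. rewrite <- HXa.
    eexists. now apply change. }
  intros eps Heps.
  set (M := 81 * K * (27/4)^n * 8).
  assert (HM : 0 < M) by (unfold M; pose proof K_pos; pose proof (pow_lt (27/4) n ltac:(lra)); nra).
  set (e := eps / M).
  assert (He : 0 < e) by (apply Rdiv_lt_0_compat; lra).
  exists (Rmin (27/4) (27/4 * e^3)). split.
  { apply Rmin_pos. lra. pose proof (pow_lt e 3 He). lra. }
  intros t pr Ht.
  assert (Ht' : 0 < t <= 27/4) by (pose proof (Rmin_l (27/4) (27/4 * e^3)); lra).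
  destruct (X_inv t Ht') as [a [Ha [HXa Ha3]]].
  rewrite <- (RInt_Reals _ _ _ pr).
  rewrite <- HXa, (is_RInt_unique _ _ _ _ (change n a Ha)).
  pose proof (mom n) as Hm.
  set (m := Binomial.C (3 * n) n / INR (n + 1)) in *.
  assert (Hex : forall u v, 0 <= u -> 0 <= v -> ex_RInt (g n) u v).
  { intros u v Hu Hv. apply (ex_RInt_continuous (V:=R_CompleteNormedModule)).
    intros z Hz. apply g_cont. pose proof (Rmin_glb u v 0 Hu Hv). lra. }
  assert (Hch := RInt_Chasles (V:=R_CompleteNormedModule) (g n) 0 a 1 (Hex 0 a ltac:(lra) ltac:(lra)) (Hex a 1 ltac:(lra) ltac:(lra))).
  rewrite (is_RInt_unique _ _ _ _ Hm) in Hch. unfold plus in Hch; simpl in Hch.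
  assert (Hb := abs_RInt_le_const (g n) 0 a M ltac:(lra) (Hex 0 a ltac:(lra) ltac:(lra))
                 (fun u Hu => g_bound n u ltac:(lra))).
  replace (RInt (g n) a 1 - m) with (- RInt (g n) 0 a) by lra.
  rewrite Rabs_Ropp.
  assert (a * M < eps).
  { destruct (Rlt_le_dec (a * M) eps) as [|Hge]; auto. exfalso.
    assert (e <= a) by (unfold e; apply Rle_div_l; lra).
    assert (e^3 <= a^3) by (apply pow_incr; lra).
    pose proof (Rmin_r (27/4) (27/4 * e^3)). lra. }
  lra.
Qed.
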